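(* Consider the asynchronous market process described in the context, and assume the demand functions satisfy: (fixed spending) $\sum_ip_ix_i(p)=M$ for all $p$ (constant $M>0$); (WGS) for $j\ne i$, $x_j(p)$ is non-decreasing in $p_i$; (elasticity $E$) each $x_i$ is differentiable in $p_i$ with $\frac{x_i(p)}{p_i}\le-\frac{\partial x_i}{\partial p_i}(p)\le E\frac{x_i(p)}{p_i}$ for all $p$, where $E\ge 1$. Suppose $x_i(t)\le d\,w_i$ for all $i$ and all $t$, where $d\ge2$, and that $\alpha_1(d-1)\le1$ and $\lambda\alpha_1+\lambda\big(1+\frac{2Ed}{1-\lambda E}\big)\le1$ (with $\lambda E<1$). Then for all $t\ge0$, $\phi(t+1)\le\big(1-\frac{\lambda\alpha_1}{2}\big)\phi(t)$. Hence $\phi$ decreases from $\phi_I$ to at most $\phi_F$ within $O\big(\frac{1}{\lambda\alpha_1}\log\frac{\phi_I}{\phi_F}\big)$ days.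
   Context: Asynchronous market process: $n$ goods with daily supply rates $w_i>0$ and demand functions $x_i:(0,\infty)^n\to(0,\infty)$ (demands are instantaneous daily rates). Time $t\ge0$ is continuous (unit: one day). The price vector $p(t)$ is piecewise constant and right-continuous with finitely many changes in any bounded interval; write $x_i(t)=x_i(p(t))$. Each price $p_i$ changes only at its own update times; time $0$ is an update time for every good and consecutive update times of the same good are at most $1$ apart. $\tau_i(t)$ denotes the last update time of $p_i$ that is $\le t$, and $\bar x_i(t)=\frac1{t-\tau_i(t)}\int_{\tau_i(t)}^t x_i(s)\,ds$ if $t>\tau_i(t)$ (with $\bar x_i(t)=x_i(t)$ if $t=\tau_i(t)$). At an update time $t$ of good $i$, $p_i(t)=p_i(t^-)\big(1+\lambda\min\{1,\frac{\bar x_i(t^-)-w_i}{w_i}\}\big)$, where $\bar x_i(t^-)$ is the average demand over $[\tau_i(t^-),t]$; $\lambda>0$ is a fixed parameter. For reals $a,b,c$, $\mathrm{span}(a,b,c)=\max\{a,b,c\}-\min\{a,b,c\}$. The potential is $\phi=\sum_i\phi_i$ with $\phi_i(t)=p_i(t)\big[\mathrm{span}(x_i(t),\bar x_i(t),w_i)-\alpha_1\lambda|w_i-\bar x_i(t)|\,(t-\tau_i(t))\big]$, where $\alpha_1>0$ is a constant. *)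

(* Defs.v *)
From Stdlib Require Import Reals Lra ClassicalEpsilon.
Open Scope R_scope.

Fixpoint rsum (n : nat) (f : nat -> R) : R :=
  match n with O => 0 | S m => rsum m f + f m end.

(* price vectors: nat -> R, only coordinates < n are meaningful *)
Definition pos_vec (n : nat) (p : nat -> R) : Prop :=
  forall i, (i < n)%nat -> 0 < p i.

Definition upd (p : nat -> R) (i : nat) (s : R) : nat -> R :=
  fun j => if Nat.eq_dec j i then s else p j.

Definition span3 (a b c : R) : R := Rmax a (Rmax b c) - Rmin a (Rmin b c).

(* Riemann integral of f over [a,b] (well defined whenever f is
   Riemann integrable on [a,b], by proof irrelevance of RiemannInt). *)
Definition integral (f : R -> R) (a b : R) : R :=
  epsilon (inhabits 0)
    (fun I => exists pr : Riemann_integrable f a b, RiemannInt pr = I).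

(* u k = k-th update time of a good (u 0 = 0).  tau u t = last update time
   that is <= t. *)
Definition tau (u : nat -> R) (t : R) : R :=
  epsilon (inhabits 0) (fun s => exists k, u k = s /\ u k <= t /\ t < u (S k)).

Definition xbar (x : nat -> (nat -> R) -> R) (u : nat -> nat -> R)
    (p : R -> nat -> R) (i : nat) (t : R) : R :=
  let ti := tau (u i) t in
  if Req_EM_T t ti then x i (p t)
  else / (t - ti) * integral (fun s => x i (p s)) ti t.

Definition phi_i (x : nat -> (nat -> R) -> R) (w : nat -> R) (lam alpha1 : R)
    (u : nat -> nat -> R) (p : R -> nat -> R) (i : nat) (t : R) : R :=
  p t i * (span3 (x i (p t)) (xbar x u p i t) (w i)
           - alpha1 * lam * Rabs (w i - xbar x u p i t) * (t - tau (u i) t)).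

Definition phi (n : nat) (x : nat -> (nat -> R) -> R) (w : nat -> R)
    (lam alpha1 : R) (u : nat -> nat -> R) (p : R -> nat -> R) (t : R) : R :=
  rsum n (fun i => phi_i x w lam alpha1 u p i t).

(* Main.v *)
Require Import Defs.
From Stdlib Require Import Reals Lra Psatz Arith Lia FunctionalExtensionality Bool ClassicalEpsilon RList RiemannInt_SF RiemannInt.
Open Scope R_scope.
Local Open Scope bool_scope.
Open Scope R_scope.

Ltac simpmm := repeat match goal with
  | |- context [Rmax ?a ?b] => first [rewrite (Rmax_left a b) by lra | rewrite (Rmax_right a b) by lra]
  | |- context [Rmin ?a ?b] => first [rewrite (Rmin_left a b) by lra | rewrite (Rmin_right a b) by lra]
  | |- context [Rabs ?a] => first [rewrite (Rabs_right a) by lra | rewrite (Rabs_left a) by lra]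
  end.

Lemma lemA c x Xb w dl D : 0 <= c <= 1/3 -> 0 <= dl -> 0 < D -> dl + D <= 1 ->
  let X' := (dl*Xb + x*D)/(dl+D) in
  (1 + c*D) * (span3 x X' w - c*Rabs(w - X')*(dl+D)) <= span3 x Xb w - c*Rabs(w-Xb)*dl.
Proof.
  intros Hc Hdl HD HS X'.
  assert (HX : X' * (dl + D) = dl*Xb + x*D) by (unfold X'; field; lra).
  assert (HXa : Rabs (w - X') * (dl+D) = Rabs (w*(dl+D) - (dl*Xb + x*D))).
  { rewrite <- HX. replace (w * (dl + D) - X' * (dl + D)) with ((w - X')*(dl+D)) by ring.
    rewrite Rabs_mult, (Rabs_right (dl+D)) by lra. ring. }
  rewrite Rmult_assoc, HXa.
  clearbody X'.
  assert (P1 : 0 <= c*D) by nra. assert (P2 : 0 <= c*dl) by nra.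
  assert (P3 : 0 <= c*c*D*D) by nra. assert (P4 : 0 <= c*c*D*dl) by nra.
  assert (P5 : c*D <= 1/3) by nra. assert (P6 : c*dl <= 1/3) by nra.
  assert (P7 : c*(dl+D) <= 1/3) by nra.
  assert (P8 : c*dl*(2+c*D) <= 7/9) by nra.
  assert (P9 : c*(dl+D)*(2+c*D) <= 7/9) by nra.
  assert (P10 : c*D*(2+c*D) <= 7/9) by nra.
  assert (P11 : 0 <= c*c*D) by nra.
  assert (HX1 : (X'-x)*(dl+D) = dl*(Xb-x)) by nra.
  assert (HX2 : (X'-Xb)*(dl+D) = D*(x-Xb)) by nra.
  assert (HB1 : x <= Xb -> x <= X' <= Xb) by (intros; split; nra).
  assert (HB2 : Xb <= x -> Xb <= X' <= x) by (intros; split; nra).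
  unfold span3.
  destruct (Rle_dec x w); destruct (Rle_dec Xb w); destruct (Rle_dec x Xb);
  destruct (Rle_dec X' w); destruct (Rle_dec x X'); destruct (Rle_dec X' Xb);
  destruct (Rle_dec 0 (w * (dl + D) - (dl * Xb + x * D)));
  simpmm; try nra.

Qed.

Ltac span_tac := unfold span3; repeat match goal with
  | |- context [Rmax ?a ?b] => lazymatch b with context [Rmax _ _] => fail | _ =>
      destruct (Rle_dec a b); [rewrite (Rmax_right a b) by lra | rewrite (Rmax_left a b) by lra] end
  | |- context [Rmin ?a ?b] => lazymatch b with context [Rmin _ _] => fail | _ =>
      destruct (Rle_dec a b); [rewrite (Rmin_left a b) by lra | rewrite (Rmin_right a b) by lra] end
  | |- context [Rabs ?a] => destruct (Rle_dec 0 a); [rewrite (Rabs_right a) by lra | rewrite (Rabs_left a) by lra]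
  end; lra.

Lemma span3_ab a b c : Rabs (a - b) <= span3 a b c.
Proof. span_tac. Qed.
Lemma span3_ac a b c : Rabs (a - c) <= span3 a b c.
Proof. span_tac. Qed.
Lemma span3_bc a b c : Rabs (c - b) <= span3 a b c.
Proof. span_tac. Qed.
Lemma span3_aa a c : span3 a a c = Rabs (a - c).
Proof. unfold span3. destruct (Rle_dec a c).
  rewrite (Rmax_right a c), (Rmin_left a c), Rmax_right, Rmin_left, Rabs_left1 by lra; lra.
  rewrite (Rmax_left a c), (Rmin_right a c), Rmax_left, Rmin_right, Rabs_right by lra; lra. Qed.
Lemma span3_lip a a' b c : span3 a b c - span3 a' b c <= Rabs (a - a').
Proof. span_tac. Qed.


Lemma cDdl c D dl : 0 <= c -> 0 <= D -> 0 <= dl <= 1 -> c * D * dl <= c * D.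
Proof. intros. assert (0 <= c * D) by (apply Rmult_le_pos; lra). nra. Qed.

Lemma key (E d lam c w Xb dl xt xh : R) :
  1 <= E -> 2 <= d -> 0 < lam -> lam * E < 1 -> 0 <= c -> c * (d - 1) <= lam -> c <= lam ->
  c + lam * (1 + 2 * E * d / (1 - lam * E)) <= 1 ->
  0 < w -> 0 <= Xb <= d * w -> 0 <= dl <= 1 -> 0 <= xt -> 0 <= xh ->
  let r := lam * Rmin 1 ((Xb - w) / w) in
  (0 <= r -> (1 + r) * xh <= xt /\ xt * (1 - E * r) <= xh) ->
  (r < 0 -> xt <= (1 + r) * xh /\ xh * (1 + E * r) <= xt /\ xt <= d * w) ->
  (1 + r) * Rabs (xh - w) + Rabs ((1 + r) * xh - xt) <= span3 xt Xb w - c * Rabs (w - Xb) * dl.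
Proof.
  intros HE Hd Hl HlE Hc0 Hc1 Hc2 Hcond Hw HXb Hdl Hxt Hxh r Hpos Hneg.
  set (q := 1 - lam * E).
  assert (Hq : 0 < q) by (unfold q; lra).
  assert (Hl1 : lam < 1) by nra.
  set (G := 2 * E * d / q).
  assert (HG1 : 2 * (E - 1 + E * lam) / q <= G).
  { unfold G. apply Rmult_le_compat_r. left; apply Rinv_0_lt_compat; lra. nra. }
  assert (HG2 : 2 * d * (E - 1) / q <= G).
  { unfold G. apply Rmult_le_compat_r. left; apply Rinv_0_lt_compat; lra. nra. }
  fold q in Hcond. fold G in Hcond.
  destruct (Rle_dec w Xb) as [HXw|HXw].
  -
    set (D := Xb - w).
    assert (Hm : Rmin 1 ((Xb - w) / w) = (Xb - w)/w \/ Rmin 1 ((Xb - w) / w) = 1 /\ w < Xb - w).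
    { destruct (Rle_dec ((Xb - w)/w) 1).
      - left. apply Rmin_right. lra.
      - right. split. apply Rmin_left. lra.
        apply Rnot_le_lt in n. apply (Rmult_lt_compat_r w) in n; [|lra].
        unfold Rdiv in n. rewrite Rmult_assoc, Rinv_l, Rmult_1_r in n; lra. }
    assert (Hr0 : 0 <= r).
    { unfold r. destruct Hm as [Hm|[Hm _]]; rewrite Hm. apply Rmult_le_pos; [lra|].
      apply Rmult_le_pos; [lra|]. left; apply Rinv_0_lt_compat; lra. lra. }
    assert (Hrw : c * D <= r * w <= lam * D /\ r <= lam).
    { unfold r, D. destruct Hm as [Hm|[Hm Hm2]]; rewrite Hm.
      - assert (E1 : lam * ((Xb - w) / w) * w = lam * (Xb - w)) by (field; lra).
        rewrite E1. assert ((Xb - w)/w <= 1).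
        { destruct (Rle_dec ((Xb - w)/w) 1). lra. exfalso. rewrite Rmin_left in Hm by lra. 
          apply Rnot_le_lt in n. rewrite <- Hm in n. lra. }
        nra.
      - nra. }
    destruct (Hpos Hr0) as [H1 H2].
    assert (HErr : 0 < 1 - E * r) by nra.
    rewrite (Rabs_left1 (w - Xb)) by lra.
    destruct (Rle_dec w xh) as [Hxw|Hxw].
    + rewrite (Rabs_right (xh - w)) by lra. rewrite (Rabs_left1 ((1+r)*xh - xt)) by lra.
      assert (w <= xt) by nra.
      pose proof (span3_ac xt Xb w) as Hs. rewrite Rabs_right in Hs by lra.
      assert (c * D * dl <= c * D) by (apply cDdl; unfold D; lra).
      unfold D in *. lra.
    + rewrite (Rabs_left1 (xh - w)) by lra. rewrite (Rabs_left1 ((1+r)*xh - xt)) by lra.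
      assert (Hxt2 : xt * (1 - E * r) < w) by lra.
      assert (HK : 2 * xt * r * (E - 1 + E * r) <= G * lam * D).
      { assert (xt * q <= w).
        { unfold q. assert (xt*(1 - lam*E) <= xt*(1-E*r)) by (apply Rmult_le_compat_l; [lra|nra]). lra. }
        assert (2 * xt * r * (E - 1 + E * r) * q <= 2 * (E - 1 + E * lam) * (r * w)).
        { assert (0 <= E - 1 + E * r) by nra.
          assert (E - 1 + E * r <= E - 1 + E * lam) by nra.
          assert (0 <= 2 * r * (E - 1 + E * r)) by nra.
          apply Rle_trans with (2 * r * (E - 1 + E * r) * w).
          replace (2 * xt * r * (E - 1 + E * r) * q) with ((2 * r * (E - 1 + E * r)) * (xt * q)) by ring.
          apply Rmult_le_compat_l; lra.
          replace (2 * r * (E - 1 + E * r) * w) with ((2 * (E - 1 + E * r)) * (r * w)) by ring.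
          apply Rmult_le_compat_r; [nra|lra]. }
        assert (2 * (E - 1 + E * lam) * (r * w) <= 2 * (E - 1 + E * lam) * (lam * D)).
        { apply Rmult_le_compat_l. nra. lra. }
        assert (2 * xt * r * (E - 1 + E * r) <= 2 * (E - 1 + E * lam) / q * (lam * D)).
        { apply (Rmult_le_reg_r q); [lra|]. unfold Rdiv.
          replace (2 * (E - 1 + E * lam) * / q * (lam * D) * q) with (2 * (E - 1 + E * lam) * (lam * D)) by (field; lra).
          lra. }
        assert (0 <= lam * D) by (unfold D; nra). nra. }
      assert (HLHS : (1 + r) * - (xh - w) + - ((1 + r) * xh - xt) <= (1 + r) * w - xt + 2 * xt * r * (E - 1 + E * r)).
      { nra. }
      destruct (Rle_dec xt w).
      * pose proof (span3_ab xt Xb w) as Hs. rewrite Rabs_left1 in Hs by lra.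
        assert (lam * D + G * lam * D + c * D <= D) by (unfold D; nra).
        assert (c * D * dl <= c * D) by (apply cDdl; unfold D; lra).
        unfold D in *. lra.
      * pose proof (span3_bc xt Xb w) as Hs. rewrite Rabs_left1 in Hs by lra.
        assert (lam * D + G * lam * D + c * D <= D) by (unfold D; nra).
        assert (c * D * dl <= c * D) by (apply cDdl; unfold D; lra).
        unfold D in *. lra.
  -
    apply Rnot_le_lt in HXw.
    set (D := w - Xb).
    assert (Hm : Rmin 1 ((Xb - w) / w) = (Xb - w)/w).
    { apply Rmin_right. assert ((Xb - w)/w < 0). apply Rdiv_neg_pos; lra. lra. }
    assert (Hrw : r * w = - (lam * D)).
    { unfold r, D. rewrite Hm. field. lra. }
    assert (Hrm1 : (Xb - w) / w >= -1).
    { apply Rle_ge. apply (Rmult_le_reg_r w); [lra|]. unfold Rdiv. rewrite Rmult_assoc, Rinv_l by lra. lra. }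
    assert (Hrl : - lam <= r < 0).
    { unfold r. rewrite Hm. split. nra. assert ((Xb - w)/w < 0). apply Rdiv_neg_pos; lra. nra. }
    destruct (Hneg (proj2 Hrl)) as [H1 [H2 H3]].
    rewrite (Rabs_right D) by (unfold D; lra).
    rewrite (Rabs_right ((1+r)*xh - xt)) by lra.
    destruct (Rle_dec xh w) as [Hxw|Hxw].
    + rewrite (Rabs_left1 (xh - w)) by lra.
      pose proof (span3_bc xt Xb w) as Hs. pose proof (span3_ac xt Xb w) as Hs2.
      assert (c * D * dl <= c * D) by (apply cDdl; unfold D; lra).
      assert (c * D <= lam * D) by (apply Rmult_le_compat_r; unfold D; lra).
      unfold D in *. destruct (Rle_dec w xt).
      * rewrite Rabs_right in Hs2 by lra. rewrite Rabs_right in Hs by lra. lra.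
      * rewrite Rabs_left1 in Hs2 by lra. rewrite Rabs_right in Hs by lra. lra.
    + rewrite (Rabs_right (xh - w)) by lra.
      assert (HEr : q <= 1 + E * r) by (unfold q; nra).
      set (s := 1 + E * r).
      assert (Hs0 : q <= s <= 1) by (unfold s, q; nra).
      assert (Hx1 : (1 + r) * xh * s <= xt * s + xt * (E - 1) * (- r)).
      { replace (xt * s + xt * (E - 1) * (- r)) with ((1 + r) * xt) by (unfold s; ring).
        rewrite Rmult_assoc. apply Rmult_le_compat_l; unfold s; lra. }
      assert (HK0 : 0 <= xt * (E - 1) * (- r)).
      { apply Rmult_le_pos; [apply Rmult_le_pos|]; lra. }
      assert (HK : (1 + r) * xh * q <= xt * q + xt * (E - 1) * (- r)).
      { apply (Rmult_le_reg_r s); [lra|].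
        assert (q * ((1 + r) * xh * s) <= q * (xt * s + xt * (E - 1) * (- r))) by (apply Rmult_le_compat_l; lra).
        assert (xt * (E - 1) * (- r) * q <= xt * (E - 1) * (- r) * s) by (apply Rmult_le_compat_l; lra).
        nra. }
      assert (Hxr : xt * (- r) <= d * (lam * D)).
      { assert (- r = lam * D / w) by (apply (Rmult_eq_reg_r w); [unfold Rdiv; rewrite Rmult_assoc, Rinv_l; lra | lra]).
        rewrite H. unfold Rdiv. apply (Rmult_le_reg_r w); [lra|].
        replace (xt * (lam * D * / w) * w) with (xt * (lam * D)) by (field; lra).
        assert (0 <= lam * D) by (unfold D; nra). nra. }
      assert (HK2 : 2 * (1 + r) * xh - xt <= xt + G * lam * D).
      { assert (2 * (1 + r) * xh * q <= 2 * xt * q + 2 * d * (E - 1) * (lam * D)).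
        { assert (xt * (E - 1) * (- r) <= (E - 1) * (d * (lam * D))).
          { replace (xt * (E - 1) * (- r)) with ((E - 1) * (xt * (- r))) by ring.
            apply Rmult_le_compat_l; lra. }
          nra. }
        assert (2 * d * (E - 1) * (lam * D) <= G * lam * D * q).
        { unfold G. unfold Rdiv. replace (2 * E * d * / q * lam * D * q) with (2 * E * d * (lam * D)) by (field; lra).
          assert (0 <= lam * D) by (unfold D; nra). nra. }
        apply (Rmult_le_reg_r q); [lra|]. nra. }
      assert (HB : lam * D + G * lam * D + c * D <= D) by (unfold D; nra).
      pose proof (span3_ab xt Xb w) as Hs. pose proof (span3_bc xt Xb w) as Hs2. rewrite Rabs_right in Hs2 by lra.
      assert (c * D * dl <= c * D) by (apply cDdl; unfold D; lra).
      unfold D in *. destruct (Rle_dec Xb xt).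
      * rewrite Rabs_right in Hs by lra. nra.
      * rewrite Rabs_left1 in Hs by lra. nra.
Qed.


Section El.
Variables (g : R -> R) (E a b : R).
Hypothesis HE : 1 <= E.
Hypothesis Ha : 0 < a.
Hypothesis Hab : a <= b.
Hypothesis Hg : forall s, a <= s <= b -> 0 < g s.
Hypothesis Hd : forall s, a <= s <= b -> exists l, derivable_pt_lim g s l /\ g s / s <= - l /\ - l <= E * (g s / s).

Definition gd (s : R) : R := epsilon (inhabits 0) (fun l => derivable_pt_lim g s l /\ g s / s <= - l /\ - l <= E * (g s / s)).

Lemma gd_spec s : a <= s <= b -> derivable_pt_lim g s (gd s) /\ g s / s <= - gd s /\ - gd s <= E * (g s / s).
Proof. intro H. unfold gd. apply epsilon_spec. apply Hd; auto. Qed.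

Lemma h1_mono s1 s2 : a <= s1 -> s1 <= s2 -> s2 <= b -> s2 * g s2 <= s1 * g s1.
Proof.
  intros H1 H2 H3. destruct (Rle_lt_or_eq_dec _ _ H2) as [Hlt|Heq]; [|subst; lra].
  destruct (MVT_cor2 (fun s => s * g s) (fun s => 1 * g s + s * gd s) s1 s2 Hlt) as [c [Hc1 Hc2]].
  - intros c Hc. destruct (gd_spec c ltac:(lra)) as [Hd1 _].
    apply (derivable_pt_lim_mult id g c 1 (gd c)); [apply derivable_pt_lim_id | exact Hd1].
  - destruct (gd_spec c ltac:(lra)) as [_ [Hl _]].
    assert (Hgc := Hg c ltac:(lra)).
    assert (c * (g c / c) <= c * - gd c) by (apply Rmult_le_compat_l; lra).
    replace (c * (g c / c)) with (g c) in H by (field; lra).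
    assert (1 * g c + c * gd c <= 0) by lra.
    assert ((1 * g c + c * gd c) * (s2 - s1) <= 0).
    { assert (0 <= - (1 * g c + c * gd c) * (s2 - s1)) by (apply Rmult_le_pos; lra). lra. }
    lra.
Qed.

Lemma gdiv_le s : a <= s <= b -> g s / s <= g a / a.
Proof.
  intro H. pose proof (h1_mono a s ltac:(lra) ltac:(lra) ltac:(lra)).
  assert (Hgs := Hg s H). assert (Hga := Hg a ltac:(lra)).
  unfold Rdiv. apply (Rmult_le_reg_r (s * a)); [nra|].
  replace (g s * / s * (s * a)) with (g s * a) by (field; lra).
  replace (g a * / a * (s * a)) with (g a * s) by (field; lra).
  apply (Rmult_le_reg_r s); [lra|].
  assert (a * (s * g s) <= a * (a * g a)) by (apply Rmult_le_compat_l; lra).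
  assert (a * a <= s * s) by nra.
  assert (g a * (a * a) <= g a * (s * s)) by (apply Rmult_le_compat_l; lra).
  nra.
Qed.

Lemma h2_bound : g a * (1 - E * (b - a) / a) <= g b.
Proof.
  destruct (Rle_lt_or_eq_dec _ _ Hab) as [Hlt|Heq]; [|subst; replace (b-b) with 0 by ring; unfold Rdiv; rewrite Rmult_0_r, Rmult_0_l, Rminus_0_r, Rmult_1_r; lra].
  set (K := E * (g a / a)).
  destruct (MVT_cor2 (fun s => g s + K * s) (fun s => gd s + K * 1) a b Hlt) as [c [Hc1 Hc2]].
  - intros c Hc. destruct (gd_spec c ltac:(lra)) as [Hd1 _].
    apply (derivable_pt_lim_plus g (fun s => K * s)); [exact Hd1|].
    apply (derivable_pt_lim_scal id K c 1). apply derivable_pt_lim_id.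
  - destruct (gd_spec c ltac:(lra)) as [_ [_ Hl]].
    pose proof (gdiv_le c ltac:(lra)).
    assert (E * (g c / c) <= K) by (unfold K; apply Rmult_le_compat_l; lra).
    assert (0 <= (gd c + K * 1) * (b - a)) by (apply Rmult_le_pos; lra).
    assert (g a * (1 - E * (b - a) / a) = g a - K * (b - a)) by (unfold K; field; lra).
    lra.
Qed.

Lemma h3_bound : g a * (1 - E * (1 - a / b)) <= g b.
Proof.
  destruct (Rle_lt_or_eq_dec _ _ Hab) as [Hlt|Heq]; [|subst; unfold Rdiv; rewrite Rinv_r by lra; lra].
  set (K := E * a * g a).
  destruct (MVT_cor2 (fun s => g s + K * (- / s)) (fun s => gd s + K * (/ (s * s))) a b Hlt) as [c [Hc1 Hc2]].
  - intros c Hc. destruct (gd_spec c ltac:(lra)) as [Hd1 _].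
    apply (derivable_pt_lim_plus g (fun s => K * (- / s))); [exact Hd1|].
    apply (derivable_pt_lim_scal (fun s => - / s) K c).
    assert (Hdv := derivable_pt_lim_div (fct_cte (-1)) id c 0 1 (derivable_pt_lim_const (-1) c) (derivable_pt_lim_id c) ltac:(unfold id; lra)).
    unfold fct_cte, id, Rsqr in Hdv.
    replace (/ (c * c)) with ((0 * c - 1 * -1) / (c * c)) by (field; lra).
    eapply derivable_pt_lim_ext; [|exact Hdv].
    intro s. unfold div_fct, fct_cte, id. unfold Rdiv. ring.
  - destruct (gd_spec c ltac:(lra)) as [_ [_ Hl]].
    pose proof (h1_mono a c ltac:(lra) ltac:(lra) ltac:(lra)).
    assert (Hgc := Hg c ltac:(lra)).
    assert (E * (g c / c) <= K / (c * c)).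
    { unfold K. unfold Rdiv. apply (Rmult_le_reg_r (c * c)); [nra|].
      replace (E * (g c * / c) * (c * c)) with (E * (c * g c)) by (field; lra).
      replace (E * a * g a * / (c * c) * (c * c)) with (E * (a * g a)) by (field; lra).
      apply Rmult_le_compat_l; lra. }
    assert (0 <= (gd c + K * / (c * c)) * (b - a)).
    { apply Rmult_le_pos; [|lra]. unfold Rdiv in H0. lra. }
    assert (g a * (1 - E * (1 - a / b)) = g a + K * (- / a) - K * (- / b)) by (unfold K; field; lra).
    lra.
Qed.
End El.


Lemma rsum_ext n f g : (forall j, (j < n)%nat -> f j = g j) -> rsum n f = rsum n g.
Proof. induction n; simpl; intros H; auto. rewrite IHn by (intros; apply H; lia). rewrite H by lia. auto. Qed.

Lemma rsum_le n f g : (forall j, (j < n)%nat -> f j <= g j) -> rsum n f <= rsum n g.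
Proof. induction n; simpl; intros H. lra. pose proof (IHn ltac:(intros; apply H; lia)). pose proof (H n ltac:(lia)). lra. Qed.

Lemma rsum_plus n f g : rsum n (fun j => f j + g j) = rsum n f + rsum n g.
Proof. induction n; simpl. lra. rewrite IHn. lra. Qed.

Lemma rsum_scal n a f : rsum n (fun j => a * f j) = a * rsum n f.
Proof. induction n; simpl. lra. rewrite IHn. lra. Qed.

Lemma rsum_opp n f : rsum n (fun j => - f j) = - rsum n f.
Proof. induction n; simpl. lra. rewrite IHn. lra. Qed.

Lemma rsum_zero n : rsum n (fun _ => 0) = 0.
Proof. induction n; simpl; lra. Qed.

Lemma rsum_nonneg n f : (forall j, (j < n)%nat -> 0 <= f j) -> 0 <= rsum n f.
Proof. intros H. rewrite <- (rsum_zero n). apply rsum_le. auto. Qed.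

Definition dropi (i : nat) (f : nat -> R) : nat -> R := fun j => if Nat.eq_dec j i then 0 else f j.

Lemma rsum_split n i f : (i < n)%nat -> rsum n f = f i + rsum n (dropi i f).
Proof.
  induction n; intros H. lia. simpl.
  destruct (Nat.eq_dec n i).
  - subst.
    assert (rsum i (dropi i f) = rsum i f).
    { apply rsum_ext. intros j Hj. unfold dropi. destruct (Nat.eq_dec j i); [lia|auto]. }
    assert (dropi i f i = 0) by (unfold dropi; destruct (Nat.eq_dec i i); congruence).
    lra.
  - rewrite IHn by lia.
    assert (dropi i f n = f n) by (unfold dropi; destruct (Nat.eq_dec n i); congruence).
    lra.
Qed.

Lemma rsum_abs_nonneg n f : (forall j, (j < n)%nat -> 0 <= f j) -> rsum n (fun j => Rabs (f j)) = Rabs (rsum n f).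
Proof.
  intros H. rewrite Rabs_right by (apply Rle_ge, rsum_nonneg; auto).
  apply rsum_ext. intros. apply Rabs_right. apply Rle_ge. auto.
Qed.

Lemma rsum_abs_same_sign n f : ((forall j, (j < n)%nat -> 0 <= f j) \/ (forall j, (j < n)%nat -> f j <= 0)) ->
  rsum n (fun j => Rabs (f j)) = Rabs (rsum n f).
Proof.
  intros [H|H]. apply rsum_abs_nonneg; auto.
  rewrite <- Rabs_Ropp, <- rsum_opp. rewrite <- rsum_abs_nonneg.
  apply rsum_ext. intros. rewrite Rabs_Ropp. auto.
  intros. specialize (H j H0). lra.
Qed.


Section Jump.
Variables (n : nat) (w : nat -> R) (x : nat -> (nat -> R) -> R) (M E d lam c : R).
Hypothesis Hw : forall i, (i < n)%nat -> 0 < w i.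
Hypothesis Hxpos : forall i p0, (i < n)%nat -> pos_vec n p0 -> 0 < x i p0.
Hypothesis Hxdep : forall i p0 q0, (i < n)%nat ->
       (forall k, (k < n)%nat -> p0 k = q0 k) -> x i p0 = x i q0.
Hypothesis Hspend : forall p0, pos_vec n p0 -> rsum n (fun i => p0 i * x i p0) = M.
Hypothesis Hwgs : forall p0 i j s, (i < n)%nat -> (j < n)%nat -> j <> i ->
       pos_vec n p0 -> p0 i <= s -> x j p0 <= x j (upd p0 i s).
Hypothesis HE : 1 <= E.
Hypothesis Helast : forall p0 i, (i < n)%nat -> pos_vec n p0 ->
       exists l, derivable_pt_lim (fun s => x i (upd p0 i s)) (p0 i) l /\
         x i p0 / p0 i <= - l /\ - l <= E * (x i p0 / p0 i).
Hypothesis Hlam : 0 < lam.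
Hypothesis Hd : 2 <= d.
Hypothesis HlamE : lam * E < 1.
Hypothesis Hc0 : 0 <= c.
Hypothesis Hc1 : c * (d - 1) <= lam.
Hypothesis Hc2 : c <= lam.
Hypothesis Hcond : c + lam * (1 + 2 * E * d / (1 - lam * E)) <= 1.

Definition Tm (Xb dl : nat -> R) (b : bool) (P X : R) (j : nat) : R :=
  if b then P * Rabs (X - w j) else P * (span3 X (Xb j) (w j) - c * Rabs (w j - Xb j) * dl j).

Definition Psi Xb dl (z : nat -> R) (dn : nat -> bool) : R :=
  rsum n (fun j => Tm Xb dl (dn j) (z j) (x j z) j).

Lemma Tm_lip Xb dl b P X1 X2 j : 0 <= P -> Tm Xb dl b P X1 j - Tm Xb dl b P X2 j <= P * Rabs (X1 - X2).
Proof.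
  intros HP. unfold Tm. destruct b.
  - pose proof (Rabs_triang_inv (X1 - w j) (X2 - w j)).
    replace (X1 - w j - (X2 - w j)) with (X1 - X2) in H by ring.
    assert (P * (Rabs (X1 - w j) - Rabs (X2 - w j)) <= P * Rabs (X1 - X2)) by (apply Rmult_le_compat_l; lra).
    lra.
  - pose proof (span3_lip X1 X2 (Xb j) (w j)).
    assert (P * (span3 X1 (Xb j) (w j) - span3 X2 (Xb j) (w j)) <= P * Rabs (X1 - X2)) by (apply Rmult_le_compat_l; lra).
    lra.
Qed.

Lemma upd_same z i s : upd z i s i = s.
Proof. unfold upd. destruct (Nat.eq_dec i i); congruence. Qed.
Lemma upd_other z i s j : j <> i -> upd z i s j = z j.
Proof. intros. unfold upd. destruct (Nat.eq_dec j i); congruence. Qed.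
Lemma upd_upd z i s t : upd (upd z i s) i t = upd z i t.
Proof. apply functional_extensionality. intro j. unfold upd. destruct (Nat.eq_dec j i); auto. Qed.
Lemma upd_id z i : upd z i (z i) = z.
Proof. apply functional_extensionality. intro j. unfold upd. destruct (Nat.eq_dec j i); subst; auto. Qed.

Lemma pos_upd z i s : pos_vec n z -> 0 < s -> pos_vec n (upd z i s).
Proof. intros Hz Hs j Hj. unfold upd. destruct (Nat.eq_dec j i); auto. Qed.

Lemma wgs_sign z i s : pos_vec n z -> (i < n)%nat -> 0 < s ->
  (forall j, (j < n)%nat -> 0 <= dropi i (fun j => z j * (x j (upd z i s) - x j z)) j) \/
  (forall j, (j < n)%nat -> dropi i (fun j => z j * (x j (upd z i s) - x j z)) j <= 0).
Proof.
  intros Hz Hi Hs. destruct (Rle_dec (z i) s).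
  - left. intros j Hj. unfold dropi. destruct (Nat.eq_dec j i). lra.
    pose proof (Hwgs z i j s Hi Hj n0 Hz r). pose proof (Hz j Hj). nra.
  - right. intros j Hj. unfold dropi. destruct (Nat.eq_dec j i). lra.
    pose proof (Hwgs (upd z i s) i j (z i) Hi Hj n1 (pos_upd z i s Hz Hs)) as H.
    rewrite upd_same, upd_upd, upd_id in H. pose proof (Hz j Hj). nra.
Qed.

Lemma spend_shift z i s : pos_vec n z -> (i < n)%nat -> 0 < s ->
  rsum n (dropi i (fun j => z j * (x j (upd z i s) - x j z))) = z i * x i z - s * x i (upd z i s).
Proof.
  intros Hz Hi Hs.
  pose proof (Hspend z Hz) as H1. pose proof (Hspend (upd z i s) (pos_upd z i s Hz Hs)) as H2.
  rewrite (rsum_split n i) in H1, H2 by auto.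
  rewrite upd_same in H2.
  assert (E1 : rsum n (dropi i (fun j => z j * (x j (upd z i s) - x j z))) =
     rsum n (dropi i (fun j => upd z i s j * x j (upd z i s))) + - rsum n (dropi i (fun j => z j * x j z))).
  { rewrite <- rsum_opp, <- rsum_plus. apply rsum_ext. intros j Hj. unfold dropi.
    destruct (Nat.eq_dec j i). lra. rewrite upd_other by auto. ring. }
  rewrite E1. lra.
Qed.

Lemma step Xb dl z dn i s : pos_vec n z -> (i < n)%nat -> 0 < s -> dn i = false ->
  s * Rabs (x i (upd z i s) - w i) + Rabs (s * x i (upd z i s) - z i * x i z)
    <= z i * (span3 (x i z) (Xb i) (w i) - c * Rabs (w i - Xb i) * dl i) ->
  Psi Xb dl (upd z i s) (fun j => if Nat.eq_dec j i then true else dn j) <= Psi Xb dl z dn.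
Proof.
  intros Hz Hi Hs Hdn HK. unfold Psi.
  rewrite (rsum_split n i _ Hi), (rsum_split n i (fun j => Tm Xb dl (dn j) (z j) (x j z) j) Hi).
  destruct (Nat.eq_dec i i); [|congruence]. rewrite upd_same, Hdn.
  unfold Tm at 1 3. simpl.
  assert (HL : rsum n (dropi i (fun j => Tm Xb dl (if Nat.eq_dec j i then true else dn j) (upd z i s j) (x j (upd z i s)) j))
     <= rsum n (dropi i (fun j => Tm Xb dl (dn j) (z j) (x j z) j)) + rsum n (fun j => Rabs (dropi i (fun j => z j * (x j (upd z i s) - x j z)) j))).
  { rewrite <- rsum_plus. apply rsum_le. intros j Hj. unfold dropi.
    destruct (Nat.eq_dec j i). rewrite Rabs_R0. lra.
    rewrite upd_other by auto.
    pose proof (Tm_lip Xb dl (dn j) (z j) (x j (upd z i s)) (x j z) j ltac:(pose proof (Hz j Hj); lra)).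
    rewrite Rabs_mult, (Rabs_right (z j)) by (pose proof (Hz j Hj); lra). lra. }
  rewrite rsum_abs_same_sign in HL by (apply wgs_sign; auto).
  rewrite spend_shift in HL by auto.
  rewrite Rabs_minus_sym in HL. lra.
Qed.


Definition rr (Xbi wi : R) : R := lam * Rmin 1 ((Xbi - wi) / wi).

Lemma rr_bounds Xbi wi : 0 < wi -> 0 <= Xbi -> - lam <= rr Xbi wi <= lam.
Proof.
  intros Hw0 HX. unfold rr. assert (-1 <= (Xbi - wi)/wi).
  { apply (Rmult_le_reg_r wi); [lra|]. unfold Rdiv. rewrite Rmult_assoc, Rinv_l by lra. lra. }
  destruct (Rle_dec 1 ((Xbi - wi) / wi)).
  - rewrite Rmin_left by lra. lra.
  - rewrite Rmin_right by lra. split; nra.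
Qed.

Lemma lam_lt1 : lam < 1.
Proof. nra. Qed.

Lemma keystep Xb dl z i : pos_vec n z -> (i < n)%nat ->
  0 <= Xb i <= d * w i -> 0 <= dl i <= 1 ->
  (rr (Xb i) (w i) < 0 -> x i z <= d * w i) ->
  let s := z i * (1 + rr (Xb i) (w i)) in
  s * Rabs (x i (upd z i s) - w i) + Rabs (s * x i (upd z i s) - z i * x i z)
    <= z i * (span3 (x i z) (Xb i) (w i) - c * Rabs (w i - Xb i) * dl i).
Proof.
  intros Hz Hi HXb Hdl Hneg s.
  pose proof (Hw i Hi) as Hwi. pose proof (Hz i Hi) as Hzi.
  pose proof (rr_bounds (Xb i) (w i) Hwi (proj1 HXb)) as Hr. pose proof lam_lt1.
  set (r := rr (Xb i) (w i)) in *.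
  assert (Hs : 0 < s) by (unfold s; nra).
  set (g := fun σ => x i (upd z i σ)).
  assert (Hxt : x i z = g (z i)) by (unfold g; rewrite upd_id; auto).
  assert (Hg : forall σ, 0 < σ -> 0 < g σ) by (intros; unfold g; apply Hxpos; auto; apply pos_upd; auto).
  assert (Hgd : forall σ, 0 < σ -> exists l, derivable_pt_lim g σ l /\ g σ / σ <= - l /\ - l <= E * (g σ / σ)).
  { intros σ Hσ. destruct (Helast (upd z i σ) i Hi (pos_upd z i σ Hz Hσ)) as [l [Hl1 Hl2]].
    exists l. rewrite upd_same in Hl1, Hl2.
    replace (fun s0 => x i (upd (upd z i σ) i s0)) with g in Hl1.
    split; auto.
    apply functional_extensionality. intro t. unfold g. rewrite upd_upd. auto. }
  set (xt := x i z) in *. set (xh := x i (upd z i s)).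
  assert (Hxh : xh = g s) by auto.
  assert (Hxt0 : 0 < xt) by (unfold xt; apply Hxpos; auto).
  assert (Hxh0 : 0 < xh) by (rewrite Hxh; apply Hg; auto).
  assert (HK : (1 + r) * Rabs (xh - w i) + Rabs ((1 + r) * xh - xt) <= span3 xt (Xb i) (w i) - c * Rabs (w i - Xb i) * dl i).
  { apply (key E d lam c (w i) (Xb i) (dl i) xt xh); auto; try lra.
    - intros Hr0. change (0 <= r) in Hr0. change ((1 + r) * xh <= xt /\ xt * (1 - E * r) <= xh).
      assert (Hab : z i <= s) by (unfold s; nra).
      assert (Hg' : forall σ, z i <= σ <= s -> 0 < g σ) by (intros; apply Hg; lra).
      assert (Hgd' : forall σ, z i <= σ <= s -> exists l, derivable_pt_lim g σ l /\ g σ / σ <= - l /\ - l <= E * (g σ / σ)) by (intros; apply Hgd; lra).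
      pose proof (h1_mono g E (z i) s Hzi Hg' Hgd' (z i) s ltac:(lra) Hab ltac:(lra)) as H1.
      pose proof (h2_bound g E (z i) s HE Hzi Hab Hg' Hgd') as H2.
      rewrite <- Hxh, <- Hxt in *. split.
      + unfold s in H1. apply (Rmult_le_reg_l (z i)); [lra|]. nra.
      + replace (E * (s - z i) / z i) with (E * r) in H2 by (unfold s; field; lra). lra.
    - intros Hr0. change (r < 0) in Hr0. change (xt <= (1 + r) * xh /\ xh * (1 + E * r) <= xt /\ xt <= d * w i).
      assert (Hab : s <= z i) by (unfold s; nra).
      assert (Hg' : forall σ, s <= σ <= z i -> 0 < g σ) by (intros; apply Hg; lra).
      assert (Hgd' : forall σ, s <= σ <= z i -> exists l, derivable_pt_lim g σ l /\ g σ / σ <= - l /\ - l <= E * (g σ / σ)) by (intros; apply Hgd; lra).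
      pose proof (h1_mono g E s (z i) Hs Hg' Hgd' s (z i) ltac:(lra) Hab ltac:(lra)) as H1.
      pose proof (h3_bound g E s (z i) HE Hs Hab Hg' Hgd') as H3.
      rewrite <- Hxh, <- Hxt in *. split; [|split].
      + unfold s in H1. apply (Rmult_le_reg_l (z i)); [lra|]. nra.
      + replace (1 - E * (1 - s / z i)) with (1 + E * r) in H3 by (unfold s; field; lra). lra.
      + apply Hneg. auto. }
  assert (Hsr : s = z i * (1 + r)) by auto.
  rewrite Hsr. replace (z i * (1 + r) * xh - z i * xt) with (z i * ((1 + r) * xh - xt)) by ring.
  rewrite Rabs_mult, (Rabs_right (z i)) by lra.
  replace (z i * (1 + r) * Rabs (xh - w i) + z i * Rabs ((1 + r) * xh - xt)) with (z i * ((1 + r) * Rabs (xh - w i) + Rabs ((1 + r) * xh - xt))) by ring.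
  apply Rmult_le_compat_l; lra.
Qed.

Lemma phase_step Xb dl z dn i : pos_vec n z -> (i < n)%nat -> dn i = false ->
  0 <= Xb i <= d * w i -> 0 <= dl i <= 1 ->
  (rr (Xb i) (w i) < 0 -> x i z <= d * w i) ->
  Psi Xb dl (upd z i (z i * (1 + rr (Xb i) (w i)))) (fun j => if Nat.eq_dec j i then true else dn j) <= Psi Xb dl z dn.
Proof.
  intros Hz Hi Hdn HX Hdl Hneg. apply step; auto.
  pose proof (rr_bounds (Xb i) (w i) (Hw i Hi) (proj1 HX)). pose proof lam_lt1. pose proof (Hz i Hi). nra.
  apply keystep; auto.
Qed.

Section Phases.
Variables (Xb dl q q' : nat -> R) (U : nat -> bool).
Hypothesis Hq : pos_vec n q.
Hypothesis HU1 : forall i, (i < n)%nat -> U i = true -> q' i = q i * (1 + rr (Xb i) (w i)).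
Hypothesis HU0 : forall i, (i < n)%nat -> U i = false -> q' i = q i.
Hypothesis HXb : forall i, (i < n)%nat -> 0 <= Xb i <= d * w i.
Hypothesis Hdl : forall i, (i < n)%nat -> 0 <= dl i <= 1.
Hypothesis Hxq : forall i, (i < n)%nat -> x i q <= d * w i.

Definition neg j : bool := if Rlt_dec (rr (Xb j) (w j)) 0 then true else false.
Definition dn1 m j : bool := (j <? m)%nat && U j && neg j.
Definition z1 m j : R := if dn1 m j then q' j else q j.
Definition dn2 m j : bool := ((j <? n)%nat && U j && neg j) || ((j <? m)%nat && U j && negb (neg j)).
Definition z2 m j : R := if dn2 m j then q' j else q j.

Lemma q'_pos : pos_vec n q'.
Proof.
  intros i Hi. destruct (U i) eqn:Hu.
  - rewrite HU1 by auto. pose proof (rr_bounds (Xb i) (w i) (Hw i Hi) (proj1 (HXb i Hi))). pose proof lam_lt1.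
    pose proof (Hq i Hi). nra.
  - rewrite HU0 by auto. auto.
Qed.

Lemma z1_pos m : pos_vec n (z1 m).
Proof. intros i Hi. unfold z1. destruct (dn1 m i). apply q'_pos; auto. auto. Qed.
Lemma z2_pos m : pos_vec n (z2 m).
Proof. intros i Hi. unfold z2. destruct (dn2 m i). apply q'_pos; auto. auto. Qed.

Lemma phase1 m : (m <= n)%nat ->
  Psi Xb dl (z1 m) (dn1 m) <= Psi Xb dl q (fun _ => false) /\
  (forall j, (j < n)%nat -> dn1 m j = false -> x j (z1 m) <= x j q).
Proof.
  induction m; intros Hm.
  - assert (E1 : z1 0 = q) by (apply functional_extensionality; intro j; reflexivity).
    assert (E2 : dn1 0 = fun _ => false) by (apply functional_extensionality; intro j; reflexivity).
    rewrite E1, E2. split; [lra|]. intros; lra.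
  - destruct (IHm ltac:(lia)) as [IH1 IH2].
    destruct (U m && neg m) eqn:Hum.
    + assert (Hzm : z1 m m = q m) by (unfold z1, dn1; rewrite Nat.ltb_irrefl; reflexivity).
      assert (Hdm : dn1 m m = false) by (unfold dn1; rewrite Nat.ltb_irrefl; reflexivity).
      apply andb_prop in Hum as [Hu Hng].
      assert (Hs : q' m = z1 m m * (1 + rr (Xb m) (w m))) by (rewrite Hzm; apply HU1; auto; lia).
      assert (E1 : z1 (S m) = upd (z1 m) m (z1 m m * (1 + rr (Xb m) (w m)))).
      { apply functional_extensionality. intro j. rewrite <- Hs. unfold upd, z1, dn1.
        destruct (Nat.eq_dec j m). subst. rewrite (proj2 (Nat.ltb_lt m (S m))) by lia. rewrite Hu, Hng. auto.
        destruct (Nat.ltb_spec j m); destruct (Nat.ltb_spec j (S m)); try lia; auto. }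
      assert (E2 : dn1 (S m) = fun j => if Nat.eq_dec j m then true else dn1 m j).
      { apply functional_extensionality. intro j. unfold dn1.
        destruct (Nat.eq_dec j m). subst. rewrite (proj2 (Nat.ltb_lt m (S m))) by lia. rewrite Hu, Hng. auto.
        destruct (Nat.ltb_spec j m); destruct (Nat.ltb_spec j (S m)); try lia; auto. }
      assert (Hneg : rr (Xb m) (w m) < 0).
      { unfold neg in Hng. destruct (Rlt_dec (rr (Xb m) (w m)) 0); [auto|discriminate]. }
      split.
      * rewrite E1, E2. eapply Rle_trans; [apply phase_step|exact IH1]; auto using z1_pos; try lia.
        intros _. eapply Rle_trans; [apply IH2|apply Hxq]; auto; lia.
      * intros j Hj Hdj. rewrite E2 in Hdj. destruct (Nat.eq_dec j m); [discriminate|].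
        rewrite E1. eapply Rle_trans; [|apply IH2; auto].
        set (s := z1 m m * (1 + rr (Xb m) (w m))).
        assert (Hs0 : 0 < s).
        { unfold s. pose proof (rr_bounds (Xb m) (w m) (Hw m ltac:(lia)) (proj1 (HXb m ltac:(lia)))). pose proof lam_lt1.
          pose proof (z1_pos m m ltac:(lia)). nra. }
        pose proof (Hwgs (upd (z1 m) m s) m j (z1 m m) ltac:(lia) Hj n0 (pos_upd _ _ _ (z1_pos m) Hs0)) as H.
        rewrite upd_same, upd_upd, upd_id in H. apply H.
        unfold s. pose proof (z1_pos m m ltac:(lia)). nra.
    + assert (E1 : z1 (S m) = z1 m).
      { apply functional_extensionality. intro j. unfold z1, dn1.
        destruct (Nat.eq_dec j m). subst. rewrite Nat.ltb_irrefl, (proj2 (Nat.ltb_lt m (S m))) by lia. simpl. rewrite Hum. auto.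
        destruct (Nat.ltb_spec j m); destruct (Nat.ltb_spec j (S m)); try lia; auto. }
      assert (E2 : dn1 (S m) = dn1 m).
      { apply functional_extensionality. intro j. unfold dn1.
        destruct (Nat.eq_dec j m). subst. rewrite Nat.ltb_irrefl, (proj2 (Nat.ltb_lt m (S m))) by lia. simpl. rewrite Hum. auto.
        destruct (Nat.ltb_spec j m); destruct (Nat.ltb_spec j (S m)); try lia; auto. }
      rewrite E1, E2. split; auto.
Qed.

Lemma z2_eq : forall k, (k < n)%nat -> z2 n k = q' k.
Proof.
  intros k Hk. unfold z2, dn2. rewrite (proj2 (Nat.ltb_lt k n)) by auto. simpl.
  destruct (U k) eqn:Hu; destruct (neg k); simpl; auto. symmetry; apply HU0; auto. symmetry; apply HU0; auto.
Qed.

Lemma phase2 m : (m <= n)%nat -> Psi Xb dl (z2 m) (dn2 m) <= Psi Xb dl (z1 n) (dn1 n).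
Proof.
  induction m; intros Hm.
  - assert (E2 : dn2 0 = dn1 n).
    { apply functional_extensionality. intro j. unfold dn2, dn1. simpl. apply orb_false_r. }
    assert (E1 : z2 0 = z1 n) by (apply functional_extensionality; intro j; unfold z2, z1; rewrite E2; auto).
    rewrite E1, E2. lra.
  - specialize (IHm ltac:(lia)).
    destruct (U m && negb (neg m)) eqn:Hum.
    + apply andb_prop in Hum as [Hu Hng]. apply negb_true_iff in Hng.
      assert (Hdm : dn2 m m = false) by (unfold dn2; rewrite Nat.ltb_irrefl, Hng; simpl; rewrite !andb_false_r; auto).
      assert (Hzm : z2 m m = q m) by (unfold z2; rewrite Hdm; auto).
      assert (Hs : q' m = z2 m m * (1 + rr (Xb m) (w m))) by (rewrite Hzm; apply HU1; auto; lia).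
      assert (E2 : dn2 (S m) = fun j => if Nat.eq_dec j m then true else dn2 m j).
      { apply functional_extensionality. intro j. unfold dn2.
        destruct (Nat.eq_dec j m). subst. rewrite (proj2 (Nat.ltb_lt m (S m))) by lia. rewrite Hu, Hng. simpl. apply orb_true_r.
        destruct (Nat.ltb_spec j m); destruct (Nat.ltb_spec j (S m)); try lia; auto. }
      assert (E1 : z2 (S m) = upd (z2 m) m (z2 m m * (1 + rr (Xb m) (w m)))).
      { apply functional_extensionality. intro j. rewrite <- Hs. unfold upd. unfold z2 at 1. rewrite E2.
        destruct (Nat.eq_dec j m); auto. }
      assert (Hneg : ~ rr (Xb m) (w m) < 0).
      { unfold neg in Hng. destruct (Rlt_dec (rr (Xb m) (w m)) 0); [discriminate|auto]. }
      rewrite E1, E2. eapply Rle_trans; [apply phase_step|exact IHm]; auto using z2_pos; try lia.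
      intros; contradiction.
    + assert (E2 : dn2 (S m) = dn2 m).
      { apply functional_extensionality. intro j. unfold dn2.
        destruct (Nat.eq_dec j m). subst. rewrite Nat.ltb_irrefl, (proj2 (Nat.ltb_lt m (S m))) by lia. simpl.
        rewrite <- andb_assoc, Hum. auto.
        destruct (Nat.ltb_spec j m); destruct (Nat.ltb_spec j (S m)); try lia; auto. }
      assert (E1 : z2 (S m) = z2 m) by (apply functional_extensionality; intro j; unfold z2; rewrite E2; auto).
      rewrite E1, E2. auto.
Qed.

Lemma jump : rsum n (fun j => Tm Xb dl (U j) (q' j) (x j q') j) <= rsum n (fun j => Tm Xb dl false (q j) (x j q) j).
Proof.
  pose proof (phase2 n (le_n n)). pose proof (proj1 (phase1 n (le_n n))).
  unfold Psi in *.
  replace (rsum n (fun j => Tm Xb dl (U j) (q' j) (x j q') j)) with (rsum n (fun j => Tm Xb dl (dn2 n j) (z2 n j) (x j (z2 n)) j)).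
  lra.
  apply rsum_ext. intros j Hj. rewrite z2_eq by auto. rewrite (Hxdep j (z2 n) q') by (auto; apply z2_eq).
  f_equal. unfold dn2. rewrite (proj2 (Nat.ltb_lt j n)) by auto. simpl. destruct (U j); destruct (neg j); auto.
Qed.
End Phases.
End Jump.


Lemma step_isstep f a b k : a <= b -> (forall r, a < r < b -> f r = k) -> IsStepFun f a b.
Proof.
  intros Hab Hf. unfold IsStepFun. apply existT with (cons a (cons b nil)). unfold is_subdivision.
  apply existT with (cons k nil). unfold adapted_couple; repeat split.
  - unfold ordered_Rlist; intros; simpl in H; inversion H; [ simpl; assumption | elim (Nat.nle_succ_0 _ H1) ].
  - simpl; unfold Rmin; destruct (Rle_dec a b); [reflexivity|lra].
  - simpl; unfold Rmax; destruct (Rle_dec a b); [reflexivity|lra].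
  - unfold constant_D_eq, open_interval; intros i Hi; simpl in Hi; destruct i; [ intros; apply Hf; auto | lia ].
Qed.

Lemma int_const f a b k : a <= b -> (forall r, a < r < b -> f r = k) -> Riemann_integrable f a b.
Proof.
  intros Hab Hf eps. exists (mkStepFun (step_isstep f a b k Hab Hf)).
  exists (mkStepFun (StepFun_P4 a b 0)). split.
  - intros t _. simpl. unfold fct_cte. rewrite Rminus_diag, Rabs_R0. lra.
  - rewrite StepFun_P18, Rmult_0_l, Rabs_R0. apply cond_pos.
Qed.

Lemma int_const_val f a b k (pr : Riemann_integrable f a b) : a <= b -> (forall r, a < r < b -> f r = k) -> RiemannInt pr = k * (b - a).
Proof.
  intros Hab Hf. rewrite (RiemannInt_P18 pr (RiemannInt_P14 a b k) Hab) by (intros; unfold fct_cte; apply Hf; auto).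
  apply RiemannInt_P15.
Qed.

Lemma integral_eq f a b (pr : Riemann_integrable f a b) : integral f a b = RiemannInt pr.
Proof.
  unfold integral.
  destruct (epsilon_spec (inhabits 0) (fun I => exists pr, RiemannInt pr = I) (ex_intro _ (RiemannInt pr) (ex_intro _ pr eq_refl))) as [pr' H].
  rewrite <- H. apply RiemannInt_P5.
Qed.


Section Traj.
Variables (n : nat) (w : nat -> R) (x : nat -> (nat -> R) -> R)
  (M E d lam alpha1 : R) (u : nat -> nat -> R) (p : R -> nat -> R).
Hypothesis Hw : forall i, (i < n)%nat -> 0 < w i.
Hypothesis Hxpos : forall i p0, (i < n)%nat -> pos_vec n p0 -> 0 < x i p0.
Hypothesis Hxdep : forall i p0 q0, (i < n)%nat ->
       (forall k, (k < n)%nat -> p0 k = q0 k) -> x i p0 = x i q0.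
Hypothesis Hlam : 0 < lam.
Hypothesis Hu0 : forall i, (i < n)%nat -> u i O = 0.
Hypothesis Huinc : forall i k, (i < n)%nat -> u i k < u i (S k).
Hypothesis Hugap : forall i k, (i < n)%nat -> u i (S k) <= u i k + 1.
Hypothesis Huunb : forall i T, (i < n)%nat -> exists k, T < u i k.
Hypothesis Hpconst : forall i k t, (i < n)%nat -> u i k <= t < u i (S k) ->
       p t i = p (u i k) i.

Lemma u_lt i k m : (i < n)%nat -> (k < m)%nat -> u i k < u i m.
Proof.
  intros Hi H. induction H. apply Huinc; auto.
  pose proof (Huinc i m Hi). lra.
Qed.
Lemma u_le i k m : (i < n)%nat -> (k <= m)%nat -> u i k <= u i m.
Proof. intros Hi H. destruct (Nat.eq_dec k m). subst; lra. left; apply u_lt; auto; lia. Qed.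
Lemma u_nonneg i k : (i < n)%nat -> 0 <= u i k.
Proof. intros Hi. rewrite <- (Hu0 i Hi). apply u_le; auto; lia. Qed.

Lemma idx_ex i s : (i < n)%nat -> 0 <= s -> exists k, u i k <= s < u i (S k).
Proof.
  intros Hi Hs. destruct (Huunb i s Hi) as [K HK].
  induction K. rewrite Hu0 in HK by auto. lra.
  destruct (Rlt_dec s (u i K)). auto. exists K. lra.
Qed.

Lemma idx_uniq i s k1 k2 : (i < n)%nat -> u i k1 <= s < u i (S k1) -> u i k2 <= s < u i (S k2) -> k1 = k2.
Proof.
  intros Hi H1 H2. destruct (Nat.lt_trichotomy k1 k2) as [H|[H|H]]; auto.
  - pose proof (u_le i (S k1) k2 Hi H). lra.
  - pose proof (u_le i (S k2) k1 Hi H). lra.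
Qed.

Definition kidx i s : nat := epsilon (inhabits O) (fun k => u i k <= s < u i (S k)).

Lemma kidx_spec i s : (i < n)%nat -> 0 <= s -> u i (kidx i s) <= s < u i (S (kidx i s)).
Proof. intros Hi Hs. unfold kidx. apply epsilon_spec. apply idx_ex; auto. Qed.

Lemma kidx_eq i s k : (i < n)%nat -> u i k <= s < u i (S k) -> kidx i s = k.
Proof. intros Hi H. apply (idx_uniq i s); auto. apply kidx_spec; auto. pose proof (u_nonneg i k Hi). lra. Qed.

Lemma tau_eq i s : (i < n)%nat -> 0 <= s -> tau (u i) s = u i (kidx i s).
Proof.
  intros Hi Hs. unfold tau.
  destruct (epsilon_spec (inhabits 0) (fun s0 => exists k, u i k = s0 /\ u i k <= s /\ s < u i (S k))
    (ex_intro _ (u i (kidx i s)) (ex_intro _ (kidx i s) (conj eq_refl (kidx_spec i s Hi Hs))))) as [k [Hk1 Hk2]].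
  rewrite <- Hk1. f_equal. symmetry. apply kidx_eq; auto.
Qed.

Lemma p_eq i s : (i < n)%nat -> 0 <= s -> p s i = p (u i (kidx i s)) i.
Proof. intros. apply Hpconst; auto. apply kidx_spec; auto. Qed.

Definition nxt i s := u i (S (kidx i s)).

Fixpoint mn (m : nat) (s : R) : R := match m with O => s + 1 | S m' => Rmin (mn m' s) (nxt m' s) end.
Definition Nx s := mn n s.

Lemma nxt_gt i s : (i < n)%nat -> 0 <= s -> s < nxt i s <= s + 1.
Proof.
  intros Hi Hs. unfold nxt. pose proof (kidx_spec i s Hi Hs). pose proof (Hugap i (kidx i s) Hi). lra.
Qed.

Lemma mn_props m s : (m <= n)%nat -> 0 <= s ->
  s < mn m s <= s + 1 /\ (forall i, (i < m)%nat -> mn m s <= nxt i s) /\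
  (mn m s = s + 1 \/ exists i, (i < m)%nat /\ mn m s = nxt i s).
Proof.
  intros Hm Hs. induction m; simpl.
  - split; [lra|]. split; [intros; lia|]. left; auto.
  - destruct (IHm ltac:(lia)) as [H1 [H2 H3]]. pose proof (nxt_gt m s ltac:(lia) Hs).
    split; [unfold Rmin; destruct (Rle_dec (mn m s) (nxt m s)); lra|].
    split.
    + intros i Hi. destruct (Nat.eq_dec i m). subst. apply Rmin_r.
      eapply Rle_trans. apply Rmin_l. apply H2. lia.
    + unfold Rmin. destruct (Rle_dec (mn m s) (nxt m s)).
      * destruct H3 as [H3|[i [Hi H3]]]. left; auto. right; exists i; split; auto; lia.
      * right. exists m. split; auto.
Qed.

Lemma Nx_gt s : 0 <= s -> s < Nx s <= s + 1.
Proof. intros. apply mn_props; auto. Qed.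
Lemma Nx_le s i : 0 <= s -> (i < n)%nat -> Nx s <= nxt i s.
Proof. intros. apply mn_props; auto. Qed.
Lemma Nx_att s : 0 <= s -> (0 < n)%nat -> exists i, (i < n)%nat /\ Nx s = nxt i s.
Proof.
  intros Hs Hn. destruct (proj2 (proj2 (mn_props n s (le_n n) Hs))) as [H|H]; auto.
  exists O. split; auto. pose proof (Nx_le s O Hs Hn). pose proof (nxt_gt O s Hn Hs). unfold Nx in *. lra.
Qed.

Lemma seg_kidx s r i : 0 <= s -> s <= r < Nx s -> (i < n)%nat -> kidx i r = kidx i s.
Proof.
  intros Hs Hr Hi. apply kidx_eq; auto. pose proof (kidx_spec i s Hi Hs). pose proof (Nx_le s i Hs Hi). unfold nxt in *. lra.
Qed.
Lemma seg_p s r i : 0 <= s -> s <= r < Nx s -> (i < n)%nat -> p r i = p s i.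
Proof. intros. rewrite (p_eq i r), (p_eq i s) by (auto; lra). rewrite (seg_kidx s r i); auto. Qed.
Lemma seg_x s r i : 0 <= s -> s <= r < Nx s -> (i < n)%nat -> x i (p r) = x i (p s).
Proof. intros. apply Hxdep; auto. intros. apply seg_p; auto. Qed.

Lemma ev_cases s i : 0 <= s -> (i < n)%nat ->
  (Nx s < nxt i s /\ kidx i (Nx s) = kidx i s /\ p (Nx s) i = p s i) \/
  (Nx s = nxt i s /\ kidx i (Nx s) = S (kidx i s)).
Proof.
  intros Hs Hi. pose proof (Nx_le s i Hs Hi). pose proof (Nx_gt s Hs). pose proof (kidx_spec i s Hi Hs).
  destruct H as [H|H].
  - left. assert (kidx i (Nx s) = kidx i s) by (apply kidx_eq; auto; unfold nxt in H; lra).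
    split; auto. split; auto. rewrite (p_eq i (Nx s)), (p_eq i s) by (auto; lra). rewrite H2. auto.
  - right. split; auto. apply kidx_eq; auto. unfold nxt in H. rewrite H. split; [lra|]. apply Huinc; auto.
Qed.

Fixpoint nsum (m : nat) (f : nat -> nat) : nat := match m with O => O | S m' => (nsum m' f + f m')%nat end.
Definition mu s := nsum n (fun i => kidx i s).

Lemma kidx_mono i s s' : (i < n)%nat -> 0 <= s -> s <= s' -> (kidx i s <= kidx i s')%nat.
Proof.
  intros Hi Hs Hss. destruct (le_lt_dec (kidx i s) (kidx i s')); auto.
  pose proof (kidx_spec i s Hi Hs). pose proof (kidx_spec i s' Hi ltac:(lra)).
  pose proof (u_le i (S (kidx i s')) (kidx i s) Hi l). lra.
Qed.

Lemma nsum_le m f g : (forall i, (i < m)%nat -> (f i <= g i)%nat) -> (nsum m f <= nsum m g)%nat.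
Proof. induction m; simpl; intros H. lia. pose proof (IHm ltac:(intros; apply H; lia)). pose proof (H m ltac:(lia)). lia. Qed.
Lemma nsum_lt m f g i : (forall i, (i < m)%nat -> (f i <= g i)%nat) -> (i < m)%nat -> (f i < g i)%nat -> (nsum m f < nsum m g)%nat.
Proof.
  induction m; simpl; intros H Hi Hlt. lia.
  destruct (Nat.eq_dec i m). subst. pose proof (nsum_le m f g ltac:(intros; apply H; lia)). lia.
  pose proof (IHm ltac:(intros; apply H; lia) ltac:(lia) Hlt). pose proof (H m ltac:(lia)). lia.
Qed.

Lemma mu_mono s s' : 0 <= s -> s <= s' -> (mu s <= mu s')%nat.
Proof. intros. apply nsum_le. intros. apply kidx_mono; auto. Qed.
Lemma mu_step s : 0 <= s -> (0 < n)%nat -> (mu s < mu (Nx s))%nat.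
Proof.
  intros Hs Hn. destruct (Nx_att s Hs Hn) as [i [Hi Hei]].
  apply (nsum_lt n _ _ i). intros. apply kidx_mono; auto. pose proof (Nx_gt s Hs); lra. auto.
  destruct (ev_cases s i Hs Hi) as [[H _]|[_ H]]. lra. lia.
Qed.

Lemma ev_ind (Q : R -> Prop) s0 T : (0 < n)%nat -> 0 <= s0 <= T -> Q s0 ->
  (forall s, s0 <= s -> s < T -> Q s -> forall s', s < s' -> s' <= Nx s -> s' <= T -> Q s') -> Q T.
Proof.
  intros Hn HT Q0 Hstep.
  assert (Hgen : forall N s, s0 <= s <= T -> Q s -> (mu T - mu s <= N)%nat -> Q T).
  { induction N; intros s Hs Qs HN.
    - destruct (Rle_dec T (Nx s)).
      + destruct (Req_dec s T). subst; auto. apply (Hstep s); lra || auto.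
      + pose proof (mu_step s ltac:(lra) Hn). pose proof (mu_mono (Nx s) T ltac:(pose proof (Nx_gt s ltac:(lra)); lra) ltac:(lra)). lia.
    - destruct (Rle_dec T (Nx s)).
      + destruct (Req_dec s T). subst; auto. apply (Hstep s); lra || auto.
      + pose proof (Nx_gt s ltac:(lra)).
        apply (IHN (Nx s)). lra. apply (Hstep s); lra || auto.
        pose proof (mu_step s ltac:(lra) Hn). pose proof (mu_mono (Nx s) T ltac:(lra) ltac:(lra)). lia. }
  apply (Hgen (mu T - mu s0)%nat s0); auto. lra.
Qed.


Hypothesis Hn : (0 < n)%nat.

Definition fx i := fun r => x i (p r).

Lemma intg T : 0 <= T -> forall i, (i < n)%nat -> forall a, 0 <= a <= T -> inhabited (Riemann_integrable (fx i) a T).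
Proof.
  intros HT. apply (ev_ind (fun T => forall i, (i < n)%nat -> forall a, 0 <= a <= T -> inhabited (Riemann_integrable (fx i) a T)) 0 T Hn).
  - lra.
  - intros i Hi a Ha. replace a with 0 by lra. constructor. apply RiemannInt_P7.
  - intros s Hs0 HsT Qs s' Hss' Hs'N Hs'T i Hi a Ha.
    assert (Hc : forall a0, s <= a0 -> forall r, a0 < r < s' -> fx i r = x i (p s)).
    { intros a0 Ha0 r Hr. unfold fx. apply seg_x; auto; lra. }
    destruct (Rle_dec a s).
    + destruct (Qs i Hi a ltac:(lra)) as [pr1].
      constructor. apply (RiemannInt_P24 pr1). apply (int_const _ _ _ (x i (p s))). lra. apply Hc; lra.
    + constructor. apply (int_const _ _ _ (x i (p s))). lra. apply Hc; lra.
Qed.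

Hypothesis Hlam1 : lam < 1.
Hypothesis Hp0 : pos_vec n (p 0).
Hypothesis Hupdate : forall i k, (i < n)%nat ->
       p (u i (S k)) i = p (u i k) i *
         (1 + lam * Rmin 1
            ((/ (u i (S k) - u i k) *
                integral (fun s => x i (p s)) (u i k) (u i (S k)) - w i) / w i)).

Lemma int_nonneg_gen i a b : (i < n)%nat -> 0 <= a <= b -> (forall r, a < r < b -> 0 <= fx i r) -> 0 <= integral (fx i) a b.
Proof.
  intros Hi Hab Hpos. destruct (intg b ltac:(lra) i Hi a ltac:(lra)) as [pr].
  rewrite (integral_eq _ _ _ pr).
  pose proof (RiemannInt_P19 (RiemannInt_P14 a b 0) pr ltac:(lra) ltac:(intros; unfold fct_cte; apply Hpos; auto)).
  rewrite (RiemannInt_P15 (RiemannInt_P14 a b 0)) in H. lra.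
Qed.

Lemma pos_all T : 0 <= T -> forall r, 0 <= r <= T -> pos_vec n (p r).
Proof.
  intros HT. apply (ev_ind (fun T => forall r, 0 <= r <= T -> pos_vec n (p r)) 0 T Hn).
  - lra.
  - intros r Hr. replace r with 0 by lra. auto.
  - intros s Hs0 HsT Qs s' Hss' Hs'N Hs'T r Hr.
    assert (Hseg : forall r, s <= r < Nx s -> pos_vec n (p r)).
    { intros r0 Hr0 j Hj. rewrite (seg_p s r0 j) by (auto; lra). apply (Qs s); auto; lra. }
    destruct (Rle_dec r s). apply Qs; lra.
    destruct (Rlt_dec r (Nx s)). apply Hseg; lra.
    assert (r = Nx s) by lra. subst r. clear n0 n1 Hr.
    intros i Hi. destruct (ev_cases s i ltac:(lra) Hi) as [[_ [_ H]]|[Hnx Hk]].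
    + rewrite H. apply (Qs s); auto; lra.
    + rewrite (p_eq i (Nx s)) by (auto; lra). rewrite Hk. rewrite Hupdate by auto.
      set (k := kidx i s). pose proof (kidx_spec i s Hi ltac:(lra)) as Hks. fold k in Hks.
      assert (Hpk : 0 < p (u i k) i) by (unfold k; rewrite <- (p_eq i s) by (auto; lra); apply (Qs s); auto; lra).
      assert (He : u i (S k) = Nx s) by (rewrite Hnx; auto).
      assert (HI : 0 <= integral (fun s0 => x i (p s0)) (u i k) (u i (S k))).
      { apply (int_nonneg_gen i); auto. split. apply u_nonneg; auto. left; apply Huinc; auto.
        intros r0 Hr0. pose proof (u_nonneg i k Hi). unfold fx. left. apply Hxpos; auto. rewrite He in Hr0.
        destruct (Rle_dec r0 s). apply Qs; lra. apply Hseg; lra. }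
      assert (Hd0 : 0 < u i (S k) - u i k) by (pose proof (Huinc i k Hi); lra).
      assert (Havg : 0 <= / (u i (S k) - u i k) * integral (fun s0 => x i (p s0)) (u i k) (u i (S k))).
      { apply Rmult_le_pos; auto. left; apply Rinv_0_lt_compat; auto. }
      pose proof (Hw i Hi).
      assert (-1 <= (/ (u i (S k) - u i k) * integral (fun s0 => x i (p s0)) (u i k) (u i (S k)) - w i) / w i).
      { apply (Rmult_le_reg_r (w i)); auto. unfold Rdiv. rewrite Rmult_assoc, Rinv_l by lra. lra. }
      assert (-1 <= Rmin 1 ((/ (u i (S k) - u i k) * integral (fun s0 => x i (p s0)) (u i k) (u i (S k)) - w i) / w i)).
      { unfold Rmin. destruct (Rle_dec _ _); lra. }
      assert (Rmin 1 ((/ (u i (S k) - u i k) * integral (fun s0 => x i (p s0)) (u i k) (u i (S k)) - w i) / w i) <= 1) by apply Rmin_l.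
      apply Rmult_lt_0_compat; auto. nra.
Qed.


Hypothesis Hdem : forall i t, (i < n)%nat -> 0 <= t -> x i (p t) <= d * w i.

Lemma int_bounds i a b : (i < n)%nat -> 0 <= a <= b -> 0 <= integral (fx i) a b <= d * w i * (b - a).
Proof.
  intros Hi Hab. split.
  - apply int_nonneg_gen; auto. intros r Hr. unfold fx. left. apply Hxpos; auto. apply (pos_all r); lra.
  - destruct (intg b ltac:(lra) i Hi a ltac:(lra)) as [pr].
    rewrite (integral_eq _ _ _ pr).
    pose proof (RiemannInt_P19 pr (RiemannInt_P14 a b (d * w i)) ltac:(lra) ltac:(intros; unfold fct_cte, fx; apply Hdem; auto; lra)).
    rewrite (RiemannInt_P15 (RiemannInt_P14 a b (d * w i))) in H. lra.
Qed.

Lemma int_zero f a : integral f a a = 0.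
Proof. rewrite (integral_eq _ _ _ (RiemannInt_P7 f a)). rewrite (int_const_val f a a 0); [ring|lra|intros; lra]. Qed.

Lemma int_chasles i s s' a : (i < n)%nat -> 0 <= a <= s -> s <= s' <= Nx s ->
  integral (fx i) a s' = integral (fx i) a s + x i (p s) * (s' - s).
Proof.
  intros Hi Ha Hs'.
  destruct (intg s ltac:(lra) i Hi a ltac:(lra)) as [pr1].
  destruct (intg s' ltac:(lra) i Hi a ltac:(lra)) as [pr3].
  assert (Hc : forall r, s < r < s' -> fx i r = x i (p s)) by (intros; unfold fx; apply seg_x; auto; lra).
  pose proof (int_const (fx i) s s' (x i (p s)) ltac:(lra) Hc) as pr2.
  rewrite (integral_eq _ _ _ pr1), (integral_eq _ _ _ pr3).
  rewrite <- (RiemannInt_P26 pr1 pr2 pr3). rewrite (int_const_val (fx i) s s' (x i (p s)) pr2); auto; lra.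
Qed.

Lemma tau_range i s : (i < n)%nat -> 0 <= s -> 0 <= tau (u i) s <= s /\ s - tau (u i) s < 1 /\ Nx s - tau (u i) s <= 1.
Proof.
  intros Hi Hs. rewrite tau_eq by auto. pose proof (kidx_spec i s Hi Hs). pose proof (u_nonneg i (kidx i s) Hi).
  pose proof (Hugap i (kidx i s) Hi). pose proof (Nx_le s i Hs Hi). unfold nxt in *. lra.
Qed.

Lemma xbar_mul i s : (i < n)%nat -> 0 <= s ->
  (s - tau (u i) s) * xbar x u p i s = integral (fx i) (tau (u i) s) s.
Proof.
  intros Hi Hs. unfold xbar. destruct (Req_EM_T s (tau (u i) s)).
  - rewrite <- e. rewrite int_zero. ring.
  - unfold fx. field. intro. apply n0. lra.
Qed.

Lemma xbar_bounds i s : (i < n)%nat -> 0 <= s -> 0 <= xbar x u p i s <= d * w i.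
Proof.
  intros Hi Hs. pose proof (tau_range i s Hi Hs). unfold xbar. destruct (Req_EM_T s (tau (u i) s)).
  - split. left; apply Hxpos; auto. apply (pos_all s); lra. apply Hdem; auto.
  - pose proof (int_bounds i (tau (u i) s) s Hi ltac:(lra)). unfold fx in H0.
    assert (0 < s - tau (u i) s) by (destruct H as [[H1 H2] _]; destruct H1; lra).
    split. apply Rmult_le_pos. left; apply Rinv_0_lt_compat; auto. lra.
    apply (Rmult_le_reg_l (s - tau (u i) s)); auto. rewrite <- Rmult_assoc, Rinv_r by lra. lra.
Qed.


Hypothesis Hspend : forall p0, pos_vec n p0 -> rsum n (fun i => p0 i * x i p0) = M.
Hypothesis Hwgs : forall p0 i j s, (i < n)%nat -> (j < n)%nat -> j <> i ->
       pos_vec n p0 -> p0 i <= s -> x j p0 <= x j (upd p0 i s).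
Hypothesis HE : 1 <= E.
Hypothesis Helast : forall p0 i, (i < n)%nat -> pos_vec n p0 ->
       exists l, derivable_pt_lim (fun s => x i (upd p0 i s)) (p0 i) l /\
         x i p0 / p0 i <= - l /\ - l <= E * (x i p0 / p0 i).
Hypothesis Hd : 2 <= d.
Hypothesis HlamE : lam * E < 1.
Hypothesis Hc0 : 0 <= alpha1 * lam.
Hypothesis Hc13 : alpha1 * lam <= 1/3.
Hypothesis Hc1 : alpha1 * lam * (d - 1) <= lam.
Hypothesis Hc2 : alpha1 * lam <= lam.
Hypothesis Hcond : alpha1 * lam + lam * (1 + 2 * E * d / (1 - lam * E)) <= 1.

Lemma phi_unf s : phi n x w lam alpha1 u p s =
  rsum n (fun j => Tm w (alpha1 * lam) (fun j => xbar x u p j s) (fun j => s - tau (u j) s) false (p s j) (x j (p s)) j).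
Proof. reflexivity. Qed.

Lemma xbar_pre j s s' : (j < n)%nat -> 0 <= s -> s < s' <= Nx s ->
  / (s' - tau (u j) s) * integral (fx j) (tau (u j) s) s' =
  ((s - tau (u j) s) * xbar x u p j s + x j (p s) * (s' - s)) / ((s - tau (u j) s) + (s' - s)).
Proof.
  intros Hj Hs Hs'. pose proof (tau_range j s Hj Hs).
  rewrite (int_chasles j s s' (tau (u j) s)) by (auto; lra).
  rewrite xbar_mul by auto. field. lra.
Qed.

Lemma SL s s' : 0 <= s -> s < s' <= Nx s ->
  (1 + alpha1 * lam * (s' - s)) * phi n x w lam alpha1 u p s' <= phi n x w lam alpha1 u p s.
Proof.
  intros Hs Hs'.
  set (c := alpha1 * lam) in *.
  set (D := s' - s).
  set (dl := fun j => s - tau (u j) s).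
  set (Xp := fun j => (dl j * xbar x u p j s + x j (p s) * D) / (dl j + D)).
  set (dl' := fun j => dl j + D).
  assert (HD : 0 < D) by (unfold D; lra).
  assert (Hpre : (1 + c * D) * rsum n (fun j => Tm w c Xp dl' false (p s j) (x j (p s)) j) <= phi n x w lam alpha1 u p s).
  { rewrite phi_unf, <- rsum_scal. apply rsum_le. intros j Hj.
    pose proof (tau_range j s Hj Hs).
    pose proof (lemA c (x j (p s)) (xbar x u p j s) (w j) (dl j) D ltac:(lra) ltac:(unfold dl; lra) HD ltac:(unfold dl, D; lra)) as HA.
    simpl in HA. unfold Tm. fold c. fold (dl j).
    assert (Hp : 0 <= p s j) by (left; apply (pos_all s); auto; lra).
    unfold Xp, dl'.
    replace ((1 + c * D) * (p s j * (span3 (x j (p s)) ((dl j * xbar x u p j s + x j (p s) * D) / (dl j + D)) (w j) -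
       c * Rabs (w j - (dl j * xbar x u p j s + x j (p s) * D) / (dl j + D)) * (dl j + D))))
      with (p s j * ((1 + c * D) * (span3 (x j (p s)) ((dl j * xbar x u p j s + x j (p s) * D) / (dl j + D)) (w j) -
       c * Rabs (w j - (dl j * xbar x u p j s + x j (p s) * D) / (dl j + D)) * (dl j + D)))) by ring.
    apply Rmult_le_compat_l; auto. }
  assert (Hpost : phi n x w lam alpha1 u p s' <= rsum n (fun j => Tm w c Xp dl' false (p s j) (x j (p s)) j)).
  { assert (Htau : forall j, (j < n)%nat -> s' < nxt j s -> tau (u j) s' = tau (u j) s /\ xbar x u p j s' = Xp j).
    { intros j Hj Hlt. pose proof (tau_range j s Hj Hs). pose proof (kidx_spec j s Hj Hs).
      assert (Ht : tau (u j) s' = tau (u j) s).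
      { rewrite !tau_eq by (auto; lra). f_equal. apply kidx_eq; auto. unfold nxt in Hlt. lra. }
      split; auto. unfold xbar. rewrite Ht. destruct (Req_EM_T s' (tau (u j) s)). lra.
      change (fun s0 => x j (p s0)) with (fx j). rewrite xbar_pre by auto. reflexivity. }
    destruct (Rlt_dec s' (Nx s)) as [Hlt|Hge].
    - rewrite phi_unf. right. apply rsum_ext. intros j Hj.
      pose proof (Nx_le s j Hs Hj).
      destruct (Htau j Hj ltac:(lra)) as [Ht Hx].
      unfold Tm. rewrite Hx, Ht. rewrite (seg_p s s' j), (seg_x s s' j) by (auto; lra).
      unfold dl', dl, D. f_equal. f_equal. f_equal. ring.
    - assert (He : s' = Nx s) by lra. clear Hge.
      set (U := fun j => if Req_EM_T s' (nxt j s) then true else false).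
      eapply Rle_trans; [|apply (jump n w x M E d lam c Hw Hxpos Hxdep Hspend Hwgs HE Helast Hlam Hd HlamE Hc0 Hc1 Hc2 Hcond Xp dl' (p s) (p s') U)].
      + rewrite phi_unf. right. apply rsum_ext. intros j Hj.
        unfold U. destruct (Req_EM_T s' (nxt j s)).
        * destruct (ev_cases s j Hs Hj) as [[H1 _]|[H1 H2]]. lra.
          assert (Ht : tau (u j) s' = s') by (rewrite tau_eq by (auto; lra); rewrite He, H2; auto).
          unfold Tm, xbar. rewrite Ht. destruct (Req_EM_T s' s'); [|congruence].
          rewrite span3_aa. replace (s' - s') with 0 by ring. f_equal. ring.
        * pose proof (Nx_le s j Hs Hj).
          destruct (Htau j Hj ltac:(lra)) as [Ht Hx].
          unfold Tm. rewrite Hx, Ht. unfold dl', dl, D. f_equal. f_equal. f_equal. ring.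
      + intros j Hj. apply (pos_all s); auto; lra.
      + intros j Hj HU. unfold U in HU. destruct (Req_EM_T s' (nxt j s)); [|discriminate].
        destruct (ev_cases s j Hs Hj) as [[H1 _]|[H1 H2]]. lra.
        pose proof (tau_range j s Hj Hs).
        rewrite (p_eq j s') by (auto; lra). rewrite He, H2. rewrite Hupdate by auto.
        unfold nxt in H1. rewrite <- H1, <- He.
        rewrite <- (tau_eq j s) by auto.
        replace (p (tau (u j) s) j) with (p s j) by (rewrite tau_eq, <- p_eq; auto; lra).
        change (fun s0 => x j (p s0)) with (fx j).
        rewrite xbar_pre by (auto; lra). reflexivity.
      + intros j Hj HU. unfold U in HU. destruct (Req_EM_T s' (nxt j s)); [discriminate|].
        destruct (ev_cases s j Hs Hj) as [[H1 [_ H2]]|[H1 H2]]. rewrite He; auto. lra.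
      + intros j Hj. pose proof (tau_range j s Hj Hs). pose proof (Nx_le s j Hs Hj).
        assert (Hxp : Xp j = / (s' - tau (u j) s) * integral (fx j) (tau (u j) s) s') by (rewrite xbar_pre by (auto; lra); reflexivity).
        rewrite Hxp. pose proof (int_bounds j (tau (u j) s) s' Hj ltac:(lra)).
        assert (0 < s' - tau (u j) s) by lra.
        split. apply Rmult_le_pos. left; apply Rinv_0_lt_compat; auto. lra.
        apply (Rmult_le_reg_l (s' - tau (u j) s)); auto. rewrite <- Rmult_assoc, Rinv_r by lra. lra.
      + intros j Hj. pose proof (tau_range j s Hj Hs). unfold dl', dl, D. lra.
      + intros j Hj. apply Hdem; auto. }
  assert (0 <= c * D) by (apply Rmult_le_pos; lra).
  nra.
Qed.


Lemma phi_nonneg s : 0 <= s -> 0 <= phi n x w lam alpha1 u p s.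
Proof.
  intros Hs. rewrite phi_unf. apply rsum_nonneg. intros j Hj. unfold Tm.
  apply Rmult_le_pos. left; apply (pos_all s); auto; lra.
  pose proof (span3_bc (x j (p s)) (xbar x u p j s) (w j)).
  pose proof (tau_range j s Hj Hs). pose proof (Rabs_pos (w j - xbar x u p j s)).
  assert (alpha1 * lam * Rabs (w j - xbar x u p j s) * (s - tau (u j) s) <= Rabs (w j - xbar x u p j s)).
  { replace (alpha1 * lam * Rabs (w j - xbar x u p j s) * (s - tau (u j) s)) with (Rabs (w j - xbar x u p j s) * (alpha1 * lam * (s - tau (u j) s))) by ring.
    assert (alpha1 * lam * (s - tau (u j) s) <= 1) by nra. nra. }
  lra.
Qed.

Lemma mainA t : 0 <= t -> phi n x w lam alpha1 u p (t + 1) <= (1 - alpha1 * lam / 2) * phi n x w lam alpha1 u p t.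
Proof.
  intros Ht. set (c := alpha1 * lam) in *.
  assert (HQ : (1 + c * ((t + 1) - t)) * phi n x w lam alpha1 u p (t + 1) <= phi n x w lam alpha1 u p t).
  { apply (ev_ind (fun T => (1 + c * (T - t)) * phi n x w lam alpha1 u p T <= phi n x w lam alpha1 u p t) t (t + 1) Hn).
    - lra.
    - replace (t - t) with 0 by ring. lra.
    - intros s Hts Hst Qs s' Hss' Hs'N Hs'T.
      pose proof (SL s s' ltac:(lra) ltac:(lra)). fold c in H.
      pose proof (phi_nonneg s' ltac:(lra)).
      assert (0 <= c * (s - t)) by (apply Rmult_le_pos; lra).
      assert (0 <= c * (s' - s)) by (apply Rmult_le_pos; lra).
      assert ((1 + c * (s' - t)) <= (1 + c * (s' - s)) * (1 + c * (s - t))) by nra.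
      assert ((1 + c * (s - t)) * ((1 + c * (s' - s)) * phi n x w lam alpha1 u p s') <= (1 + c * (s - t)) * phi n x w lam alpha1 u p s)
        by (apply Rmult_le_compat_l; lra).
      nra. }
  replace ((t + 1) - t) with 1 in HQ by ring.
  pose proof (phi_nonneg (t + 1) ltac:(lra)).
  assert (1 <= (1 - c / 2) * (1 + c)) by nra.
  nra.
Qed.

End Traj.

Lemma iter_bound (f : R -> R) c (Hc1 : 0 < 1 - c)
  (H : forall t, 0 <= t -> f (t+1) <= (1-c) * f t) :
  forall t0, 0 <= t0 -> forall k, f (t0 + INR k) <= (1-c)^k * f t0.
Proof.
  intros t0 Ht0 k; induction k as [|k IH].
  - simpl. replace (t0+0) with t0 by ring. lra.
  - rewrite S_INR. replace (t0 + (INR k + 1)) with ((t0 + INR k) + 1) by ring.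
    assert (0 <= INR k) by apply pos_INR.
    eapply Rle_trans. apply H; lra.
    simpl. rewrite Rmult_assoc. apply Rmult_le_compat_l; lra.
Qed.
Lemma pow_exp c k : 0 < 1 - c -> (1-c)^k <= exp (- c * INR k).
Proof.
  intro Hc; induction k as [|k IH].
  - simpl. rewrite Rmult_0_r, exp_0. lra.
  - rewrite S_INR. replace (- c * (INR k + 1)) with (- c * INR k + - c) by ring.
    rewrite exp_plus. simpl. rewrite Rmult_comm.
    apply Rmult_le_compat; try lra. apply pow_le; lra.
    pose proof (exp_ineq1_le (-c)). lra.
Qed.
Lemma part2 (f : R -> R) c (Hc0 : 0 < c) (Hc1 : 0 < 1 - c)
  (H : forall t, 0 <= t -> f (t+1) <= (1-c) * f t) :
  forall t0 phiF, 0 <= t0 -> 0 < phiF -> 0 < f t0 ->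
  forall k : nat, / c * ln (f t0 / phiF) <= INR k -> f (t0 + INR k) <= phiF.
Proof.
  intros t0 phiF Ht0 HF Hf k Hk.
  eapply Rle_trans. apply (iter_bound f c Hc1 H t0 Ht0 k).
  assert (Hk2 : ln (f t0 / phiF) <= c * INR k).
  { apply Rmult_le_compat_l with (r := c) in Hk; [|lra].
    rewrite <- Rmult_assoc, Rinv_r in Hk by lra. lra. }
  assert (He : exp (- c * INR k) <= phiF / f t0).
  { replace (phiF / f t0) with (exp (- ln (f t0 / phiF))).
    - destruct (Rle_lt_or_eq_dec _ _ Hk2) as [h|h].
      + left. apply exp_increasing. lra.
      + rewrite h. right. f_equal. ring.
    - rewrite exp_Ropp, exp_ln. field. split; lra.
      apply Rdiv_lt_0_compat; lra. }
  pose proof (pow_exp c k Hc1).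
  apply Rle_trans with ((phiF / f t0) * f t0).
  apply Rmult_le_compat_r; lra.
  right. field. lra.
Qed.

Theorem mainTheorem10
  (n : nat) (w : nat -> R) (x : nat -> (nat -> R) -> R)
  (M E d lam alpha1 : R)
  (u : nat -> nat -> R) (p : R -> nat -> R)
  (* supplies *)
  (Hw : forall i, (i < n)%nat -> 0 < w i)
  (* demands: positive, depend only on the n price coordinates *)
  (Hxpos : forall i p0, (i < n)%nat -> pos_vec n p0 -> 0 < x i p0)
  (Hxdep : forall i p0 q0, (i < n)%nat ->
       (forall k, (k < n)%nat -> p0 k = q0 k) -> x i p0 = x i q0)
  (* fixed spending *)
  (HM : 0 < M)
  (Hspend : forall p0, pos_vec n p0 -> rsum n (fun i => p0 i * x i p0) = M)
  (* WGS *)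
  (Hwgs : forall p0 i j s, (i < n)%nat -> (j < n)%nat -> j <> i ->
       pos_vec n p0 -> p0 i <= s -> x j p0 <= x j (upd p0 i s))
  (* elasticity E *)
  (HE : 1 <= E)
  (Helast : forall p0 i, (i < n)%nat -> pos_vec n p0 ->
       exists l, derivable_pt_lim (fun s => x i (upd p0 i s)) (p0 i) l /\
         x i p0 / p0 i <= - l /\ - l <= E * (x i p0 / p0 i))
  (* parameters *)
  (Hlam : 0 < lam) (Halpha : 0 < alpha1) (Hd : 2 <= d)
  (Hlam_E : lam * E < 1)
  (Hcond1 : alpha1 * (d - 1) <= 1)
  (Hcond2 : lam * alpha1 + lam * (1 + 2 * E * d / (1 - lam * E)) <= 1)
  (* update times: u i 0 = 0, strictly increasing, gaps at most 1,
     finitely many in any bounded interval *)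
  (Hu0 : forall i, (i < n)%nat -> u i O = 0)
  (Huinc : forall i k, (i < n)%nat -> u i k < u i (S k))
  (Hugap : forall i k, (i < n)%nat -> u i (S k) <= u i k + 1)
  (Huunb : forall i T, (i < n)%nat -> exists k, T < u i k)
  (* initial prices positive *)
  (Hp0 : pos_vec n (p 0))
  (* p_i is constant between consecutive update times of good i *)
  (Hpconst : forall i k t, (i < n)%nat -> u i k <= t < u i (S k) ->
       p t i = p (u i k) i)
  (* update rule *)
  (Hupdate : forall i k, (i < n)%nat ->
       p (u i (S k)) i = p (u i k) i *
         (1 + lam * Rmin 1
            ((/ (u i (S k) - u i k) *
                integral (fun s => x i (p s)) (u i k) (u i (S k)) - w i) / w i)))
  (* demand bound *)
  (Hdem : forall i t, (i < n)%nat -> 0 <= t -> x i (p t) <= d * w i) :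
  (forall t, 0 <= t ->
     phi n x w lam alpha1 u p (t + 1)
       <= (1 - lam * alpha1 / 2) * phi n x w lam alpha1 u p t) /\
  (forall t0 phiF, 0 <= t0 -> 0 < phiF -> 0 < phi n x w lam alpha1 u p t0 ->
     forall k : nat,
       2 / (lam * alpha1) * ln (phi n x w lam alpha1 u p t0 / phiF) <= INR k ->
       phi n x w lam alpha1 u p (t0 + INR k) <= phiF).
Proof.
  assert (Hl1 : lam < 1) by nra.
  assert (Hal1 : alpha1 <= 1) by nra.
  assert (HG : 4 <= 2 * E * d / (1 - lam * E)).
  { apply (Rmult_le_reg_r (1 - lam * E)); [lra|]. unfold Rdiv. rewrite Rmult_assoc, Rinv_l by lra. nra. }
  assert (Hc13 : alpha1 * lam <= 1 / 3) by nra.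
  assert (Hcond' : alpha1 * lam + lam * (1 + 2 * E * d / (1 - lam * E)) <= 1) by (rewrite (Rmult_comm alpha1 lam); lra).
  assert (P1 : forall t, 0 <= t ->
     phi n x w lam alpha1 u p (t + 1) <= (1 - lam * alpha1 / 2) * phi n x w lam alpha1 u p t).
  { intros t Ht. destruct (Nat.eq_dec n 0) as [Hn0|Hn0].
    - subst n. unfold phi. simpl. lra.
    - rewrite (Rmult_comm lam alpha1).
      apply (mainA n w x M E d lam alpha1 u p Hw Hxpos Hxdep Hlam Hu0 Huinc Hugap Huunb Hpconst ltac:(lia) Hl1 Hp0 Hupdate Hdem Hspend Hwgs HE Helast Hd Hlam_E); try nra; auto. }
  split; auto.
  intros t0 phiF Ht0 HF Hphi k Hk.
  apply (part2 (phi n x w lam alpha1 u p) (lam * alpha1 / 2)); auto.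
  - nra.
  - nra.
  - replace (/ (lam * alpha1 / 2)) with (2 / (lam * alpha1)) by (field; nra). auto.
Qed.
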